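(* For each $\mathbf b\in\mathcal B$ let $\xi_{\mathbf b}:S\to\mathbb C[[\lambda]]$ be the $\mathbb C[\lambda]$-linear map with $\xi_{\mathbf b}(x^u)=G^{(\mathbf b)}_u(\lambda)$ for $u\in M$. Then each $\xi_{\mathbf b}$ vanishes on $\sum_{i=1}^n D_iS$ and induces a $\mathcal D$-module homomorphism $\mathcal W\to\mathbb C[[\lambda]]$, and the set $\{\xi_{\mathbf b}\}_{\mathbf b\in\mathcal B}$ is a basis of the $\mathbb C$-vector space $\mathrm{Hom}_{\mathcal D}(\mathcal W,\mathbb C[[\lambda]])$.
   Context: Let $A=\{\mathbf a_1,\dots,\mathbf a_m\}\subseteq\mathbb Z^n$ be linearly independent over $\mathbb R$, $\mathbf a_0\in\mathbb Z^n$, and $\ell_0,\ell_1,\dots,\ell_m$ positive integers with greatest common divisor $1$ such that $\ell_0\mathbf a_0=\sum_{j=1}^m\ell_j\mathbf a_j$ and $\ell_0=\sum_{j=1}^m\ell_j$. Write $\mathbf a_j=(a_{1j},\dots,a_{nj})$ and $x^u=x_1^{u_1}\cdots x_n^{u_n}$. Let $f_\lambda=\sum_{j=1}^m\ell_jx^{\mathbf a_j}-\ell_0\lambda x^{\mathbf a_0}$ with $\lambda$ an indeterminate. Let $V$ be the real span of $A$, $V_{\mathbb Z}=V\cap\mathbb Z^n$, $C(A)$ the closed real cone generated by $A$, $M=V_{\mathbb Z}\cap C(A)$. Let $S$ be the free $\mathbb C[\lambda]$-module with basis $\{x^u:u\in M\}$ (a $\mathbb C[\lambda]$-subalgebra of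 $\mathbb C[\lambda][x_1^{\pm1},\dots,x_n^{\pm1}]$). Let $D_i=x_i\partial/\partial x_i+x_i\partial f_\lambda/\partial x_i$ ($i=1,\dots,n$) and $D_\lambda=\partial/\partial\lambda-\ell_0x^{\mathbf a_0}$, operators on $S$. Let $\mathcal D=\mathbb C[\lambda]\langle\partial_\lambda\rangle$; $S$ and $\mathcal W=S/\sum_{i=1}^nD_iS$ are left $\mathcal D$-modules with $\partial_\lambda$ acting as $D_\lambda$; $\mathbb C[[\lambda]]$ is a left $\mathcal D$-module with $\partial_\lambda=d/d\lambda$. Let $P(A)=\{\sum_j c_j\mathbf a_j:0\le c_j<1\}$ and $\mathcal B=V_{\mathbb Z}\cap P(A)$. For $\mathbf b\in\mathcal B$ write uniquely $\mathbf b=\sum_{j=1}^m v_j\mathbf a_j$ with $v_j\in[0,1)\cap\mathbb Q$. For $z\in\mathbb C$, $l\in\mathbb Z$ set $[z]_0=1$, $[z]_l=1/((z+1)(z+2)\cdots(z+l))$ for $l>0$, and $[z]_l=z(z-1)\cdots(z+l+1)$ for $l<0$. For $u\in M$ put $g^{(\mathbf b)}_u=\prod_{j=1}^m[-v_j]_{s_j}\ell_j^{s_j}$ if $u=\sum_{j=1}^m(v_j-s_j)\mathbf a_j$ with all $s_j\in\mathbb Z_{\le0}$, and $g^{(\mathbf b)}_u=0$ otherwise. Define $G^{(\mathbf b)}_u(\lambda)=\sum_{s\ge0}g^{(\mathbf b)}_{u+s\mathbf a_0}\frac{(-\ell_0\lambda)^s}{s!}\in\mathbb C[[\lambda]]$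 (equivalently $\sum_u G^{(\mathbf b)}_u x^{-u}$ is the part of $\exp(-\ell_0\lambda x^{\mathbf a_0})\sum_u g^{(\mathbf b)}_ux^{-u}$ supported on monomials $x^{-u}$, $u\in M$). *)

(* Defs.v *)
(* C is an arbitrary numClosedFieldType (e.g. the complex
   numbers); "real" means [\is Num.real]. *)
From HB Require Import structures.
From mathcomp Require Import all_boot all_order all_algebra.
From mathcomp Require Import finmap.
From mathcomp.multinomials Require Import monalg.
From Stdlib Require Import ClassicalEpsilon.

Set Implicit Arguments.
Unset Strict Implicit.
Unset Printing Implicit Defensive.

Import Order.TTheory GRing.Theory Num.Theory.
Local Open Scope ring_scope.

Definition pseries (C : numClosedFieldType) := nat -> C.

(* action of a polynomial p in C[lambda] on a power series (Cauchy product) *)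
Definition pscale (C : numClosedFieldType) (p : {poly C}) (F : pseries C)
  : pseries C := fun k => \sum_(i < k.+1) p`_i * F (k - i)%N.

Definition psadd (C : numClosedFieldType) (F H : pseries C) : pseries C :=
  fun k => F k + H k.

Definition psderiv (C : numClosedFieldType) (F : pseries C) : pseries C :=
  fun k => F k.+1 * k.+1%:R.

Definition brk (C : numClosedFieldType) (z : C) (l : int) : C :=
  match l with
  | Posz k => (\prod_(i < k) (z + i.+1%:R))^-1
  | Negz k => \prod_(i < k.+1) (z - i%:R)
  end.

(* The ambient module: finitely supported families of elements of C[lambda]
   indexed by exponents u in Z^n, i.e. sums  sum_u p_u(lambda) x^u.         *)
Definition Lpoly (C : numClosedFieldType) (n : nat) :=
  {malg {poly C}['rV[int]_n]}.

Section Setting.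
Variable C : numClosedFieldType.
Variables n m : nat.
Variable a : 'I_m -> 'rV[int]_n.
Variable a0 : 'rV[int]_n.
Variable l : 'I_m -> nat.
Variable l0 : nat.

Definition is_comb (c : 'I_m -> C) (u : 'rV[int]_n) : Prop :=
  forall i : 'I_n, (u ord0 i)%:~R = \sum_(j < m) c j * (a j ord0 i)%:~R.

Definition lin_indep_real : Prop :=
  forall c : 'I_m -> C, (forall j, c j \is Num.real) ->
    (forall i : 'I_n, \sum_(j < m) c j * (a j ord0 i)%:~R = 0) ->
    forall j, c j = 0.

Definition inV (u : 'rV[int]_n) : Prop :=
  exists c : 'I_m -> C, (forall j, c j \is Num.real) /\ is_comb c u.

Definition inCone (u : 'rV[int]_n) : Prop :=
  exists c : 'I_m -> C, (forall j, c j \is Num.real /\ 0 <= c j) /\ is_comb c u.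

Definition inM (u : 'rV[int]_n) : Prop := inV u /\ inCone u.

Definition PA_coeffs (b : 'rV[int]_n) (c : 'I_m -> C) : Prop :=
  (forall j, c j \is Num.real /\ 0 <= c j < 1) /\ is_comb c b.

Definition inB (b : 'rV[int]_n) : Prop := inV b /\ exists c, PA_coeffs b c.

Definition vB (b : 'rV[int]_n) : 'I_m -> C :=
  match excluded_middle_informative (exists c, PA_coeffs b c) with
  | left h => proj1_sig (constructive_indefinite_description _ h)
  | right _ => fun _ => 0
  end.

Definition s_data (b u : 'rV[int]_n) (s : 'I_m -> int) : Prop :=
  (forall j, s j <= 0) /\ is_comb (fun j => vB b j - (s j)%:~R) u.

Definition gcoef (b u : 'rV[int]_n) : C :=
  match excluded_middle_informative (exists s, s_data b u s) with
  | left h =>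
      let s := proj1_sig (constructive_indefinite_description _ h) in
      \prod_(j < m) (brk (- vB b j) (s j) * (l j)%:R ^ (s j))
  | right _ => 0
  end.

Definition Gser (b u : 'rV[int]_n) : pseries C :=
  fun k => gcoef b (u + a0 *+ k) * (- l0%:R) ^+ k / (k`!)%:R.

Definition inS (s : Lpoly C n) : Prop := forall u, u \in msupp s -> inM u.

(* D_i = x_i d/dx_i + x_i (d f_lambda / d x_i),
   f_lambda = sum_j l_j x^{a_j} - l0 lambda x^{a0} *)
Definition Dx (i : 'I_n) (s : Lpoly C n) : Lpoly C n :=
  \sum_(u <- msupp s)
    ( << (u ord0 i)%:~R * s@_u *g u >>
    + \sum_(j < m) << ((l j)%:Z * a j ord0 i)%:~R * s@_u *g (u + a j) >>
    - << ((l0)%:Z * a0 ord0 i)%:~R * ('X * s@_u) *g (u + a0) >> ).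

Definition Dlam (s : Lpoly C n) : Lpoly C n :=
  \sum_(u <- msupp s)
    ( << (s@_u)^`() *g u >> - << l0%:R * s@_u *g (u + a0) >> ).

Definition xi (b : 'rV[int]_n) (s : Lpoly C n) : pseries C :=
  fun k => \sum_(u <- msupp s) pscale (s@_u) (Gser b u) k.

(* phi (restricted to S) is a D-module homomorphism W -> C[[lambda]],
   W = S / sum_i D_i S: C[lambda]-linear on S, vanishing on every D_i S,
   and commuting with the action of d/d lambda. *)
Definition isDhom (phi : Lpoly C n -> pseries C) : Prop :=
  [/\ forall (p : {poly C}) s t, inS s -> inS t ->
        forall k, phi (p *: s + t) k = psadd (pscale p (phi s)) (phi t) k,
      forall i s, inS s -> forall k, phi (Dx i s) k = 0
    & forall s, inS s -> forall k, phi (Dlam s) k = psderiv (phi s) k].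

End Setting.

(* Main.v *)
Require Import Defs.
From HB Require Import structures.
From mathcomp Require Import all_boot all_order all_algebra.
From mathcomp Require Import finmap.
From mathcomp.multinomials Require Import monalg.
From Stdlib Require Import ClassicalEpsilon.
From mathcomp Require Import ring zify.
Import Order.TTheory GRing.Theory Num.Theory.
Local Open Scope ring_scope.
Set Implicit Arguments.
Unset Strict Implicit.
Unset Printing Implicit Defensive.

Section PS.
Variable C : numClosedFieldType.
Implicit Types (p q : {poly C}) (F G : pseries C).

Definition Tr (K : nat) (F : pseries C) : {poly C} := \poly_(i < K.+1) F i.

Lemma pscaleT p F k K : (k <= K)%N -> pscale p F k = (p * Tr K F)`_k.
Proof.
move=> kK; rewrite coefM /pscale; apply: eq_bigr => i _.
by rewrite coef_poly ifT // ltnS (leq_trans (leq_subr _ _) kK).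
Qed.

Lemma pscale_ext p F G k : (forall j, (j <= k)%N -> F j = G j) ->
  pscale p F k = pscale p G k.
Proof. by move=> h; apply: eq_bigr => i _; rewrite h // leq_subr. Qed.

Lemma pscaleDl p q F k : pscale (p + q) F k = pscale p F k + pscale q F k.
Proof. by rewrite /pscale -big_split; apply: eq_bigr => i _; rewrite coefD mulrDl. Qed.

Lemma pscale0l F k : pscale 0 F k = 0.
Proof. by rewrite /pscale big1 // => i _; rewrite coef0 mul0r. Qed.

Lemma pscaleNl p F k : pscale (- p) F k = - pscale p F k.
Proof. by rewrite /pscale -sumrN; apply: eq_bigr => i _; rewrite coefN mulNr. Qed.

Lemma pscaleBl p q F k : pscale (p - q) F k = pscale p F k - pscale q F k.
Proof. by rewrite pscaleDl pscaleNl. Qed.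

Lemma pscaleDr p F G k : pscale p (fun j => F j + G j) k = pscale p F k + pscale p G k.
Proof. by rewrite /pscale -big_split; apply: eq_bigr => i _; rewrite mulrDr. Qed.

Lemma pscaleZr p c F k : pscale p (fun j => c * F j) k = c * pscale p F k.
Proof. by rewrite /pscale mulr_sumr; apply: eq_bigr => i _; rewrite mulrCA. Qed.

Lemma pscale_sumr p (I : Type) (r : seq I) (P : pred I) (Fs : I -> pseries C) k :
  pscale p (fun j => \sum_(i <- r | P i) Fs i j) k =
  \sum_(i <- r | P i) pscale p (Fs i) k.
Proof.
rewrite /pscale; under eq_bigr do rewrite mulr_sumr.
exact: exchange_big.
Qed.

Lemma pscaleM p q F k : pscale (p * q) F k = pscale p (pscale q F) k.
Proof.
rewrite (pscaleT _ _ (leqnn k)) -mulrA coefM /pscale; apply: eq_bigr => i _.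
by congr (_ * _); symmetry; exact: (pscaleT q F (leq_subr i k)).
Qed.

Lemma pscaleC c F k : pscale c%:P F k = c * F k.
Proof.
rewrite /pscale big_ord_recl coefC eqxx subn0 big1 ?addr0 // => i _.
by rewrite coefC /= mul0r.
Qed.

Lemma pscale1 F k : pscale 1 F k = F k.
Proof. by rewrite -polyC1 pscaleC mul1r. Qed.

Lemma pscaleX F k : pscale 'X F k = if k is k'.+1 then F k' else 0.
Proof.
rewrite (pscaleT _ _ (leqnn k)) mulrC coefMX; case: k => [//|k] /=.
by rewrite coef_poly ltnS leqnSn.
Qed.

Lemma pscale_deriv p F k :
  pscale p^`() F k + pscale p (fun j => F j.+1 * j.+1%:R) k =
  pscale p F k.+1 * k.+1%:R.
Proof.
rewrite (pscaleT _ _ (leqnSn k)) (pscaleT _ _ (leqnn k.+1)) mulr_natr -coef_deriv.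
rewrite derivM coefD; congr (_ + _).
rewrite !coefM; apply: eq_bigr => i _; congr (_ * _).
rewrite coef_deriv coef_poly ifT ?mulr_natr // !ltnS.
by rewrite (leq_trans (leq_subr _ _)) // -ltnS ltn_ord.
Qed.

End PS.
Section XS.
Variable C : numClosedFieldType.
Variable n : nat.
Implicit Types (p q : {poly C}) (F G : pseries C) (s t : Lpoly C n).

Definition Xs (H : 'rV[int]_n -> pseries C) s k : C :=
  \sum_(u <- msupp s) pscale s@_u (H u) k.

Variable H : 'rV[int]_n -> pseries C.

Lemma XsEw (d : {fset 'rV[int]_n}) s k : (msupp s `<=` d)%fset ->
  Xs H s k = \sum_(u <- d) pscale s@_u (H u) k.
Proof.
move=> le; rewrite /Xs (big_fset_incl _ le) // => x _ /mcoeff_outdom ->.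
by rewrite pscale0l.
Qed.

Lemma XsB s t k : Xs H (s - t) k = Xs H s k - Xs H t k.
Proof.
rewrite (@XsEw (msupp s `|` msupp t)%fset _ k (msuppB_le _ _)).
rewrite (@XsEw _ s k (fsubsetUl (msupp s) (msupp t))).
rewrite (@XsEw _ t k (fsubsetUr (msupp s) (msupp t))).
by rewrite -sumrB; apply: eq_bigr => u _; rewrite mcoeffB pscaleBl.
Qed.

Definition Xk k s := Xs H s k.
HB.instance Definition _ k := GRing.isAdditive.Build (Lpoly C n) C (Xk k)
  (fun s t => XsB s t k).

Lemma Xs0 k : Xs H 0 k = 0.
Proof. exact: (raddf0 (Xk k)). Qed.

Lemma XsD s t k : Xs H (s + t) k = Xs H s k + Xs H t k.
Proof. exact: (raddfD (Xk k)). Qed.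

Lemma XsN s k : Xs H (- s) k = - Xs H s k.
Proof. exact: (raddfN (Xk k)). Qed.

Lemma Xs_sum (I : Type) (r : seq I) (P : pred I) (Fs : I -> Lpoly C n) k :
  Xs H (\sum_(i <- r | P i) Fs i) k = \sum_(i <- r | P i) Xs H (Fs i) k.
Proof. exact: (raddf_sum (Xk k)). Qed.

Lemma XsZ p s k : Xs H (p *: s) k = pscale p (fun j => Xs H s j) k.
Proof.
rewrite (@XsEw _ _ k (msuppZ_le p s)) /Xs pscale_sumr; apply: eq_bigr => u _.
by rewrite mcoeffZ pscaleM.
Qed.

Lemma XsU p u k : Xs H << p *g u >> k = pscale p (H u) k.
Proof. by rewrite (@XsEw _ _ k msuppU_le) big_seq_fset1 mcoeffUU. Qed.

End XS.
Section Comb.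
Variable C : numClosedFieldType.
Variables n m : nat.
Variable a : 'I_m -> 'rV[int]_n.
Hypothesis Hli : lin_indep_real C a.

Lemma is_comb_ext (c c' : 'I_m -> C) u : (forall j, c j = c' j) ->
  is_comb a c u -> is_comb a c' u.
Proof. by move=> e h i; rewrite h; apply: eq_bigr => j _; rewrite e. Qed.

Lemma is_combD (c c' : 'I_m -> C) u u' : is_comb a c u -> is_comb a c' u' ->
  is_comb a (fun j => c j + c' j) (u + u').
Proof.
move=> h h' i; rewrite mxE intrD h h' -big_split; apply: eq_bigr => j _.
by rewrite mulrDl.
Qed.

Lemma is_combN (c : 'I_m -> C) u : is_comb a c u ->
  is_comb a (fun j => - c j) (- u).
Proof.
move=> h i; rewrite mxE intrN h -sumrN; apply: eq_bigr => j _.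
by rewrite mulNr.
Qed.

Lemma is_combB (c c' : 'I_m -> C) u u' : is_comb a c u -> is_comb a c' u' ->
  is_comb a (fun j => c j - c' j) (u - u').
Proof. by move=> h h'; apply: is_combD h (is_combN h'). Qed.

Lemma is_combMn (c : 'I_m -> C) u k : is_comb a c u ->
  is_comb a (fun j => c j *+ k) (u *+ k).
Proof.
move=> h i; rewrite mulmxnE rmorphMn /= h -sumrMnl; apply: eq_bigr => j _.
by rewrite mulrnAl.
Qed.

Lemma is_comb_unit q : is_comb a (fun j => (j == q)%:R : C) (a q).
Proof.
move=> i; rewrite (bigD1 q) //= eqxx mul1r big1 ?addr0 // => j /negbTE ->.
by rewrite mul0r.
Qed.

Lemma is_comb0 : is_comb a (fun _ => 0 : C) 0.
Proof. by move=> i; rewrite mxE big1 // => j _; rewrite mul0r. Qed.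

Lemma cplx_indep (d : 'I_m -> C) :
  (forall i : 'I_n, \sum_(j < m) d j * (a j ord0 i)%:~R = 0) ->
  forall j, d j = 0.
Proof.
move=> h.
have hR : forall j, 'Re (d j) = 0.
  apply: Hli => [j|i]; first exact: Creal_Re.
  transitivity ('Re (\sum_(j < m) d j * (a j ord0 i)%:~R)); last by rewrite h raddf0.
  rewrite raddf_sum; apply: eq_bigr => j _; symmetry; apply: ReMr; exact: realz.
have hI : forall j, 'Im (d j) = 0.
  apply: Hli => [j|i]; first exact: Creal_Im.
  transitivity ('Im (\sum_(j < m) d j * (a j ord0 i)%:~R)); last by rewrite h raddf0.
  rewrite raddf_sum; apply: eq_bigr => j _; symmetry; apply: ImMr; exact: realz.
by move=> j; rewrite [d j]Crect hR hI mulr0 addr0.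
Qed.

Lemma comb_uniq (c c' : 'I_m -> C) u :
  (forall j, c j \is Num.real) -> (forall j, c' j \is Num.real) ->
  is_comb a c u -> is_comb a c' u -> forall j, c j = c' j.
Proof.
move=> rc rc' h h' j; apply/eqP; rewrite -subr_eq0; apply/eqP.
move: j; apply: Hli => [j|i]; first by rewrite rpredB.
by rewrite -(is_combB h h' i) subrr mxE.
Qed.

Lemma comb_inj (c : 'I_m -> C) u u' : is_comb a c u -> is_comb a c u' -> u = u'.
Proof.
move=> h h'; apply/matrixP => i j; rewrite [i]ord1.
by apply: (@intr_inj C); rewrite h h'.
Qed.

End Comb.
Lemma brk_pred (C : numClosedFieldType) (z : C) (s : int) : s <= 0 ->
  brk z (s - 1) = brk z s * (z + s%:~R).
Proof.
case: s => [[|k]|k] // _.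
  rewrite (_ : Posz 0 - 1 = Negz 0); last by rewrite NegzE.
  by rewrite /brk big_ord1 big_ord0 invr1 mul1r subr0 addr0.
rewrite (_ : Negz k - 1 = Negz k.+1); last by rewrite !NegzE; lia.
rewrite /brk [in LHS]big_ord_recr /= NegzE rmorphN /=.
by congr (_ * _).
Qed.

Section GCoef.
Variable C : numClosedFieldType.
Variables n m : nat.
Variable a : 'I_m -> 'rV[int]_n.
Variable l : 'I_m -> nat.
Hypothesis Hli : lin_indep_real C a.
Hypothesis Hl : forall j, (0 < l j)%N.
Variable b : 'rV[int]_n.
Hypothesis Hb : inB C a b.

Local Notation v := (vB C a b).

Lemma vB_spec : PA_coeffs a b v.
Proof.
rewrite /vB; case: excluded_middle_informative => [h|[]]; last by case: Hb.
by case: (constructive_indefinite_description _ h).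
Qed.

Lemma v_real j : v j \is Num.real. Proof. by case: vB_spec => h _; case: (h j). Qed.
Lemma v_ge0 j : 0 <= v j. Proof. by case: vB_spec => h _; case: (h j) => _ /andP[]. Qed.
Lemma v_lt1 j : v j < 1. Proof. by case: vB_spec => h _; case: (h j) => _ /andP[]. Qed.
Lemma v_comb : is_comb a v b. Proof. by case: vB_spec. Qed.

Lemma l_neq0 j : (l j)%:R != 0 :> C.
Proof. by rewrite pnatr_eq0 -lt0n. Qed.

Definition Pg (s : 'I_m -> int) : C :=
  \prod_(j < m) (brk (- v j) (s j) * (l j)%:R ^ (s j)).

Lemma s_uniq u s s' : s_data C a b u s -> s_data C a b u s' -> forall j, s j = s' j.
Proof.
move=> [_ h] [_ h'] j.
have := comb_uniq Hli _ _ h h' j.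
have rr : forall s0 : 'I_m -> int, forall j, v j - (s0 j)%:~R \is Num.real.
  by move=> s0 j0; rewrite rpredB ?v_real ?realz.
move=> /(_ (rr s) (rr s')) e; apply: (@intr_inj C); apply/eqP.
by rewrite -eqr_opp -(inj_eq (addrI (v j))) e.
Qed.

Lemma gcoefE u s : s_data C a b u s -> gcoef C a l b u = Pg s.
Proof.
move=> hs; rewrite /gcoef; case: excluded_middle_informative => [h|[]]; last by exists s.
case: (constructive_indefinite_description _ h) => s' hs' /=.
by apply: eq_bigr => j _; rewrite (s_uniq hs' hs j).
Qed.

Lemma gcoef0 u : ~ (exists s, s_data C a b u s) -> gcoef C a l b u = 0.
Proof. by move=> nh; rewrite /gcoef; case: excluded_middle_informative. Qed.

Lemma Pg_pred s q : (forall j, s j <= 0) ->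
  Pg (fun j => if j == q then s j - 1 else s j) =
  Pg s * ((s q)%:~R - v q) / (l q)%:R.
Proof.
move=> hs; rewrite /Pg (bigD1 q) //= [in RHS](bigD1 q) //= eqxx.
rewrite (eq_bigr (fun j => brk (- v j) (s j) * (l j)%:R ^ (s j))); last first.
  by move=> j /negbTE ->.
rewrite brk_pred // expfzDr ?l_neq0 // exprN1.
have := l_neq0 q; set L := (l q)%:R; set P := \prod_(_ < _ | _) _ => hL.
by field.
Qed.

End GCoef.
Section GCoef2.
Variable C : numClosedFieldType.
Variables n m : nat.
Variable a : 'I_m -> 'rV[int]_n.
Variable l : 'I_m -> nat.
Hypothesis Hli : lin_indep_real C a.
Hypothesis Hl : forall j, (0 < l j)%N.
Variable b : 'rV[int]_n.
Hypothesis Hb : inB C a b.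

Local Notation v := (vB C a b).
Local Notation g := (gcoef C a l b).

Lemma g_rec w (t : 'I_m -> C) q :
  (forall j, t j \is Num.real /\ 0 <= t j) -> is_comb a t w ->
  t q * g w + (l q)%:R * g (w + a q) = 0.
Proof.
move=> ht hw.
have tr j : t j \is Num.real by case: (ht j).
have vr j : forall s0 : 'I_m -> int, v j - (s0 j)%:~R \is Num.real.
  by move=> s0; rewrite rpredB ?(v_real Hb) ?realz.
case: (classic (exists s, s_data C a b w s)) => [[s [hs0 hs]]|nh].
  set sq := fun j => if j == q then s j - 1 else s j.
  have hsq : s_data C a b (w + a q) sq.
    split => [j|]; first by rewrite /sq; case: eqP => _; rewrite ?hs0 //; have := hs0 j; lia.
    apply: (is_comb_ext _ (is_combD hs (is_comb_unit C a q))) => j.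
    rewrite /sq; case: eqP => [->|_]; last by rewrite addr0.
    by rewrite rmorphB rmorph1 /=; ring.
  rewrite (gcoefE l Hli Hb (conj hs0 hs)) (gcoefE l Hli Hb hsq) (Pg_pred C a Hl b q hs0).
  have -> : t q = v q - (s q)%:~R.
    exact: (comb_uniq Hli tr (fun j => vr j s) hw hs).
  have := l_neq0 C Hl q; set L := (l q)%:R; set P := Pg _ _ _ _ => hL.
  by field.
rewrite (gcoef0 l nh) mulr0 add0r (gcoef0 l (u := w + a q)) ?mulr0 // => -[s' [hs0 hs]].
apply: nh; exists (fun j => if j == q then s' j + 1 else s' j).
have hw' : is_comb a (fun j => v j - (s' j)%:~R - (j == q)%:R) w.
  by have := is_combB hs (is_comb_unit C a q); rewrite addrK.
have e := comb_uniq Hli tr (fun j => rpredB (vr j s') (realn _ _)) hw hw' q.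
split.
  move=> j; case: eqP => [->|_]; last exact: hs0.
  have : (s' q)%:~R < 0 :> C.
    have := v_lt1 Hb q; have := (ht q).2; rewrite e eqxx.
    move: (v q) (s' q)%:~R => x y h1 h2.
    have h3 : y <= x - 1 by rewrite -subr_ge0 addrAC.
    by apply: (le_lt_trans h3); rewrite subr_lt0.
  by rewrite ltrz0 => h; lia.
apply: (is_comb_ext _ hw') => j; case: eqP => [->|_]; last by rewrite subr0.
by rewrite rmorphD rmorph1 /=; ring.
Qed.

End GCoef2.
Lemma frac_diff0 (C : numClosedFieldType) (x y : C) (z : int) :
  0 <= x -> x < 1 -> 0 <= y -> y < 1 -> z%:~R = x - y -> z = 0.
Proof.
move=> x0 x1 y0 y1 e.
have h1 : z < 1 by rewrite -(ltrz1 C) e (le_lt_trans _ x1) // gerBl.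
have h2 : - z < 1 by rewrite -(ltrz1 C) rmorphN /= e opprB (le_lt_trans _ y1) // gerBl.
lia.
Qed.

Section GCoef3.
Variable C : numClosedFieldType.
Variables n m : nat.
Variable a : 'I_m -> 'rV[int]_n.
Variable l : 'I_m -> nat.
Hypothesis Hli : lin_indep_real C a.
Variable b : 'rV[int]_n.
Hypothesis Hb : inB C a b.

Local Notation v := (vB C a b).
Local Notation g := (gcoef C a l b).

Lemma g_self : g b = 1.
Proof.
have hs : s_data C a b b (fun _ => 0).
  split => // ; apply: (is_comb_ext _ (v_comb Hb)) => j; by rewrite subr0.
rewrite (gcoefE l Hli Hb hs) /Pg big1 // => j _.
by rewrite expr0z mulr1 /brk /= big_ord0 invr1.
Qed.

Lemma g_other b' : inB C a b' -> b' != b -> g b' = 0.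
Proof.
move=> Hb' nb; rewrite (gcoef0 l) // => -[s [hs0 hs]].
have vr j : v j - (s j)%:~R \is Num.real by rewrite rpredB ?(v_real Hb) ?realz.
have e := comb_uniq Hli (v_real Hb') vr (v_comb Hb') hs.
have s0 j : s j = 0.
  apply: (frac_diff0 (v_ge0 Hb j) (v_lt1 Hb j) (v_ge0 Hb' j) (v_lt1 Hb' j)).
  by rewrite e opprB addrC subrK.
move/eqP: nb; apply; apply: (comb_inj (v_comb Hb')).
apply: (is_comb_ext _ (v_comb Hb)) => j; by rewrite e s0 subr0.
Qed.

End GCoef3.
Section ConeM.
Variable C : numClosedFieldType.
Variables n m : nat.
Variable a : 'I_m -> 'rV[int]_n.
Variable a0 : 'rV[int]_n.
Variable l : 'I_m -> nat.
Variable l0 : nat.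
Hypothesis Hl0 : (0 < l0)%N.
Hypothesis Ha0 : a0 *+ l0 = \sum_(j < m) a j *+ l j.

Definition t0 (j : 'I_m) : C := (l j)%:R / l0%:R.

Lemma t0_comb : is_comb a t0 a0.
Proof.
move=> i; have h := congr1 (fun M : 'rV[int]_n => (M ord0 i)%:~R : C) Ha0.
move: h; rewrite /= mulmxnE summxE rmorphMn rmorph_sum /= => h.
have l0n : l0%:R != 0 :> C by rewrite pnatr_eq0 -lt0n.
apply: (mulIf l0n); rewrite mulr_natr h mulr_suml; apply: eq_bigr => j _.
by rewrite mulmxnE rmorphMn /= /t0 mulrAC divfK // mulr_natl.
Qed.

Lemma t0_ge0 j : t0 j \is Num.real /\ 0 <= t0 j.
Proof. by split; [rewrite /t0 rpredM ?rpredV ?realn | rewrite /t0 divr_ge0 ?ler0n]. Qed.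

Lemma inCone_add u u' : inCone C a u -> inCone C a u' -> inCone C a (u + u').
Proof.
move=> [c [hc h]] [c' [hc' h']]; exists (fun j => c j + c' j); split.
  by move=> j; case: (hc j) => r1 p1; case: (hc' j) => r2 p2; rewrite rpredD ?addr_ge0.
exact: is_combD.
Qed.

Lemma inV_add u u' : inV C a u -> inV C a u' -> inV C a (u + u').
Proof.
move=> [c [hc h]] [c' [hc' h']]; exists (fun j => c j + c' j); split.
  by move=> j; rewrite rpredD.
exact: is_combD.
Qed.

Lemma inCone_a0 : inCone C a a0.
Proof. by exists t0; split; [exact: t0_ge0 | exact: t0_comb]. Qed.

Lemma inV_a0 : inV C a a0.
Proof. by exists t0; split; [move=> j; case: (t0_ge0 j) | exact: t0_comb]. Qed.

Lemma inCone_aq q : inCone C a (a q).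
Proof.
exists (fun j => (j == q)%:R); split; last exact: is_comb_unit.
by move=> j; rewrite realn ler0n.
Qed.

Lemma inV_aq q : inV C a (a q).
Proof. by case: (inCone_aq q) => c [hc h]; exists c; split => // j; case: (hc j). Qed.

Lemma inM_add u u' : inM C a u -> inM C a u' -> inM C a (u + u').
Proof. by move=> [h1 h2] [h3 h4]; split; [apply: inV_add | apply: inCone_add]. Qed.

Lemma inM_a0 : inM C a a0. Proof. by split; [exact: inV_a0 | exact: inCone_a0]. Qed.
Lemma inM_aq q : inM C a (a q). Proof. by split; [exact: inV_aq | exact: inCone_aq]. Qed.

Lemma inM_0 : inM C a 0.
Proof.
split; exists (fun _ => 0); (split; last exact: is_comb0).
  by move=> j; rewrite real0.
by move=> j; rewrite real0 lexx.
Qed.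

Lemma inM_a0n u k : inM C a u -> inM C a (u + a0 *+ k).
Proof.
move=> hu; elim: k => [|k IH]; first by rewrite mulr0n addr0.
by rewrite mulrS addrCA addrC; apply: inM_add => //; apply: inM_a0.
Qed.

Lemma inB_inM b : inB C a b -> inM C a b.
Proof.
move=> [hV [c [hc h]]]; split => //; exists c; split => // j.
by case: (hc j) => r /andP[].
Qed.

End ConeM.
Section PS2.
Variable C : numClosedFieldType.
Implicit Types (p q : {poly C}) (F G : pseries C).

Lemma pscale_intl (z : int) p F k :
  pscale ((z%:~R : {poly C}) * p) F k = pscale p (fun j => z%:~R * F j) k.
Proof.
rewrite mulrC pscaleM; apply: pscale_ext => j _.
by rewrite -(rmorph_int (@polyC C)) pscaleC.
Qed.

Lemma pscale_natl (c : nat) p F k :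
  pscale ((c%:R : {poly C}) * p) F k = pscale p (fun j => c%:R * F j) k.
Proof. exact: (pscale_intl (Posz c)). Qed.

Lemma pscale_Xl (z : int) p F k :
  pscale ((z%:~R : {poly C}) * ('X * p)) F k =
  pscale p (fun j => z%:~R * pscale 'X F j) k.
Proof.
rewrite mulrA [_ * p]mulrC pscaleM; apply: pscale_ext => j _.
by rewrite pscale_intl pscaleZr.
Qed.

Lemma pscale0r p k : pscale p (fun _ => 0) k = 0.
Proof. by rewrite /pscale big1 // => i _; rewrite mulr0. Qed.

Lemma pscaleNr p F k : pscale p (fun j => - F j) k = - pscale p F k.
Proof. by rewrite /pscale -sumrN; apply: eq_bigr => i _; rewrite mulrN. Qed.

Lemma pscaleBr p F G k : pscale p (fun j => F j - G j) k = pscale p F k - pscale p G k.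
Proof. by rewrite pscaleDr pscaleNr. Qed.

End PS2.
Section XiHom.
Variable C : numClosedFieldType.
Variables n m : nat.
Variable a : 'I_m -> 'rV[int]_n.
Variable a0 : 'rV[int]_n.
Variable l : 'I_m -> nat.
Variable l0 : nat.
Hypothesis Hli : lin_indep_real C a.
Hypothesis Hl : forall j, (0 < l j)%N.
Hypothesis Hl0 : (0 < l0)%N.
Hypothesis Ha0 : a0 *+ l0 = \sum_(j < m) a j *+ l j.
Variable b : 'rV[int]_n.
Hypothesis Hb : inB C a b.

Local Notation G := (Gser C a a0 l l0 b).
Local Notation g := (gcoef C a l b).

Lemma natzC (k : nat) : ((k%:Z)%:~R : C) = k%:R. Proof. by []. Qed.

Lemma H_zero (u : 'rV[int]_n) (i : 'I_n) (j : nat) : inCone C a u ->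
  (u ord0 i)%:~R * G u j
  + \sum_(q < m) ((l q)%:Z * a q ord0 i)%:~R * G (u + a q) j
  - ((l0)%:Z * a0 ord0 i)%:~R * pscale 'X (G (u + a0)) j = 0.
Proof.
move=> [tu [htu hu]].
set w := u + a0 *+ j.
set t := fun q => tu q + t0 C l l0 q *+ j.
have hw : is_comb a t w := is_combD hu (is_combMn j (t0_comb C Hl0 Ha0)).
have ht q : t q \is Num.real /\ 0 <= t q.
  case: (htu q) => r1 p1; case: (t0_ge0 C l l0 q) => r2 p2.
  by split; [rewrite rpredD ?rpredMn | rewrite addr_ge0 ?mulrn_wge0].
have hrec q : (l q)%:R * g (w + a q) = - (t q * g w).
  by apply/eqP; rewrite -addr_eq0 addrC (g_rec Hli Hl Hb q ht hw).
set X := (- l0%:R) ^+ j / (j`!)%:R : C.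
have eS : \sum_(q < m) ((l q)%:Z * a q ord0 i)%:~R * G (u + a q) j
          = - ((w ord0 i)%:~R * g w * X).
  rewrite (hw i) !mulr_suml -sumrN; apply: eq_bigr => q _.
  rewrite /Gser (addrAC u (a q)) -/w intrM natzC -!mulrA -/X.
  rewrite mulrCA [(l q)%:R * _]mulrA hrec mulNr mulrN; congr (- _).
  by rewrite [RHS]mulrCA !mulrA.
rewrite eS pscaleX /Gser -/w -/X.
have ew : (w ord0 i)%:~R = (u ord0 i)%:~R + (a0 ord0 i)%:~R *+ j :> C.
  by rewrite /w mxE mulmxnE rmorphD rmorphMn.
rewrite ew; case: j @w @t @X hw ht hrec eS ew => [|j] w t X hw ht hrec eS ew.
  by rewrite /X mulr0n addr0 expr0 fact0 mulr0; ring.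
rewrite -[u + a0 + _]addrA -mulrS -/w /X factS natrM exprS.
have hj : (j`!)%:R != 0 :> C by rewrite pnatr_eq0 -lt0n fact_gt0.
have hj1 : (j.+1)%:R != 0 :> C by rewrite pnatr_eq0.
rewrite intrM natzC -mulr_natr.
field.
by rewrite hj nat1r hj1.
Qed.


Lemma G_deriv u j : G u j.+1 * j.+1%:R = - (l0%:R * G (u + a0) j).
Proof.
rewrite /Gser mulrS addrA factS natrM exprS.
have hj : (j`!)%:R != 0 :> C by rewrite pnatr_eq0 -lt0n fact_gt0.
have hj1 : (j.+1)%:R != 0 :> C by rewrite pnatr_eq0.
field.
by rewrite hj nat1r hj1.
Qed.

Lemma xi_Dx_u (i : 'I_n) (u : 'rV[int]_n) (p : {poly C}) k : inCone C a u ->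
  Xs G (<< (u ord0 i)%:~R * p *g u >>
        + \sum_(j < m) << ((l j)%:Z * a j ord0 i)%:~R * p *g (u + a j) >>
        - << ((l0)%:Z * a0 ord0 i)%:~R * ('X * p) *g (u + a0) >>) k = 0.
Proof.
move=> hu.
rewrite XsD XsN XsD Xs_sum XsU XsU pscale_intl pscale_Xl.
under eq_bigr do rewrite XsU pscale_intl.
rewrite -pscale_sumr -pscaleDr -pscaleNr -pscaleDr.
rewrite (pscale_ext _ (G := fun _ => 0)) ?pscale0r // => j _.
exact: H_zero.
Qed.

Lemma xi_Dlam_u (u : 'rV[int]_n) (p : {poly C}) k :
  Xs G (<< p^`() *g u >> - << l0%:R * p *g (u + a0) >>) k =
  pscale p (G u) k.+1 * k.+1%:R.
Proof.
rewrite XsD XsN !XsU pscale_natl -pscale_deriv; congr (_ + _).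
rewrite -pscaleNr; apply: pscale_ext => j _.
by rewrite G_deriv.
Qed.

Lemma xi_isDhom : isDhom (C:=C) a a0 l l0 (xi (C:=C) a a0 l l0 b).
Proof.
split.
- move=> p s t _ _ k.
  change (Xs G (p *: s + t) k = pscale p (fun j => Xs G s j) k + Xs G t k).
  by rewrite XsD XsZ.
- move=> i s hs k; change (Xs G (Dx a a0 l l0 i s) k = 0); rewrite /Dx Xs_sum big_seq big1 // => u hu.
  by apply: xi_Dx_u; case: (hs u hu).
- move=> s _ k; change (Xs G (Dlam a0 l0 s) k = Xs G s k.+1 * k.+1%:R).
  rewrite /Dlam Xs_sum {2}/Xs mulr_suml; apply: eq_bigr => u _.
  exact: xi_Dlam_u.
Qed.

End XiHom.
Section Rat.
Variable C : numClosedFieldType.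
Variables n m : nat.
Variable a : 'I_m -> 'rV[int]_n.
Hypothesis Hli : lin_indep_real C a.

Lemma ratr_real (q : rat) : (ratr q : C) \is Num.real.
Proof.
rewrite realE -(rmorph0 (@ratr C)) !ler_rat.
by case: (le_total 0 q) => ->; rewrite ?orbT.
Qed.

Lemma coords_bound w (t : 'I_m -> C) :
  (forall j, t j \is Num.real /\ 0 <= t j) -> is_comb a t w ->
  exists N : nat, \sum_(j < m) t j <= N%:R.
Proof.
move=> ht hw.
pose MQ : 'M[rat]_(m, n) := \matrix_(j, i) (a j ord0 i)%:~R.
pose wQ : 'rV[rat]_n := \row_i (w ord0 i)%:~R.
pose MC : 'M[C]_(m, n) := \matrix_(j, i) (a j ord0 i)%:~R.
pose wC : 'rV[C]_n := \row_i (w ord0 i)%:~R.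
have eM : map_mx ratr MQ = MC by apply/matrixP => j i; rewrite !mxE ratr_int.
have ew : map_mx ratr wQ = wC by apply/matrixP => j i; rewrite !mxE ratr_int.
have eT : (\row_j t j) *m MC = wC.
  by apply/matrixP => i0 i; rewrite !mxE (hw i); apply: eq_bigr => j _; rewrite !mxE.
have sub : (wQ <= MQ)%MS by rewrite -(map_submx (@ratr C)) eM ew -eT submxMl.
pose tQ := wQ *m pinvmx MQ.
have htQ : is_comb a (fun j => ratr (tQ ord0 j) : C) w.
  move=> i; have := congr1 (fun M : 'rV[C]_n => M ord0 i)
                    (congr1 (map_mx (@ratr C)) (mulmxKpV sub)).
  rewrite map_mxM eM ew /= !mxE => <-; apply: eq_bigr => j _; rewrite !mxE.
  by [].
have e j : t j = ratr (tQ ord0 j) :> C.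
  by apply: (comb_uniq Hli _ _ hw htQ) => j0; [case: (ht j0) | exact: ratr_real].
exists (\sum_(j < m) Num.Def.archi_bound (tQ ord0 j))%N.
rewrite natr_sum; apply: ler_sum => j _; rewrite e.
have q0 : 0 <= tQ ord0 j by rewrite -(ler_rat C) rmorph0 -e; case: (ht j).
rewrite -(rmorph_nat (@ratr C)) ler_rat; apply: ltW.
exact: archi_boundP.
Qed.

End Rat.
Section Enum.
Variable C : numClosedFieldType.
Variables n m : nat.
Variable a : 'I_m -> 'rV[int]_n.

Definition Kn : nat := (\sum_(i < n) \sum_(j < m) `|a j ord0 i|)%N.

Lemma inB_bounded b : inB C a b -> forall i, (`|b ord0 i| <= Kn)%N.
Proof.
move=> [_ [c [hc hb]]] i.
have h1 : (`|b ord0 i|%N%:R : C) <= (\sum_(j < m) `|a j ord0 i|)%N%:R.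
  rewrite natr_absz intr_norm hb natr_sum.
  apply: (le_trans (ler_norm_sum _ _ _)); apply: ler_sum => j _.
  rewrite normrM natr_absz intr_norm; case: (hc j) => _ /andP[c0 c1].
  by rewrite (ger0_norm c0) ler_piMl ?normr_ge0 ?ltW.
rewrite ler_nat in h1; apply: (leq_trans h1).
by rewrite /Kn (bigD1 i) //= leq_addr.
Qed.

Definition Lbox : seq 'rV[int]_n :=
  [seq \row_i ((f i : nat)%:Z - Kn%:Z) | f : {ffun 'I_n -> 'I_(Kn + Kn).+1}].

Lemma in_Lbox (b : 'rV[int]_n) : (forall i, (`|b ord0 i| <= Kn)%N) -> b \in Lbox.
Proof.
move=> hb; apply/mapP.
exists [ffun i => inord (absz (b ord0 i + Kn%:Z))]; first by rewrite mem_enum.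
apply/matrixP => i0 i; have -> : i0 = ord0 by rewrite [i0]ord1; apply/val_inj.
rewrite !mxE ffunE inordK.
  by have := hb i; move: (b ord0 i) => x; lia.
by have := hb i; move: (b ord0 i) => x; lia.
Qed.

Definition pB (b : 'rV[int]_n) : bool :=
  if excluded_middle_informative (inB C a b) then true else false.

Lemma pBP b : pB b <-> inB C a b.
Proof. by rewrite /pB; case: excluded_middle_informative. Qed.

Definition rB := undup (filter pB Lbox).

Lemma rB_uniq : uniq rB. Proof. exact: undup_uniq. Qed.

Lemma rB_mem b : b \in rB <-> inB C a b.
Proof.
rewrite /rB mem_undup mem_filter; split => [/andP[/pBP //]|hb].
by apply/andP; split; [apply/pBP | apply: in_Lbox; apply: inB_bounded].
Qed.

End Enum.
Section Span1.
Variable C : numClosedFieldType.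
Variables n m : nat.
Variable a : 'I_m -> 'rV[int]_n.
Variable a0 : 'rV[int]_n.
Variable l : 'I_m -> nat.
Variable l0 : nat.
Hypothesis Hli : lin_indep_real C a.
Hypothesis Hl : forall j, (0 < l j)%N.
Hypothesis Hl0 : (0 < l0)%N.
Hypothesis Ha0 : a0 *+ l0 = \sum_(j < m) a j *+ l j.

Lemma inS_U (p : {poly C}) u : inM C a u -> inS a << p *g u >>.
Proof.
move=> hu v /(fsubsetP msuppU_le); rewrite in_fset1 => /eqP ->; exact: hu.
Qed.

Lemma inS0 : inS (C:=C) a 0.
Proof. by move=> v; rewrite msupp0 in_fset0. Qed.

Lemma inSD (s t : Lpoly C n) : inS a s -> inS a t -> inS a (s + t).
Proof.
move=> hs ht v /(fsubsetP (msuppD_le _ _)); rewrite in_fsetU => /orP[]; [exact: hs | exact: ht].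
Qed.

Lemma inSZ (p : {poly C}) (s : Lpoly C n) : inS a s -> inS a (p *: s).
Proof. by move=> hs v /(fsubsetP (msuppZ_le _ _)); exact: hs. Qed.

Lemma inS_sum (I : Type) (r : seq I) (P : pred I) (F : I -> Lpoly C n) :
  (forall i, P i -> inS a (F i)) -> inS a (\sum_(i <- r | P i) F i).
Proof.
move=> h; elim/big_rec: _ => [|i x Pi hx]; first exact: inS0.
exact: inSD (h i Pi) hx.
Qed.

Lemma xi_at_unit b b0 : inB C a b -> inB C a b0 ->
  xi (C:=C) a a0 l l0 b << 1 *g b0 >> 0 = (b == b0)%:R.
Proof.
move=> hb hb0; change (Xs (Gser C a a0 l l0 b) << 1 *g b0 >> 0 = (b == b0)%:R).
rewrite XsU pscale1 /Gser mulr0n addr0 expr0 fact0 divr1 mulr1.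
case: eqP => [->|/eqP ne]; first exact: (g_self l Hli hb0).
by apply: (g_other l Hli hb hb0); rewrite eq_sym.
Qed.


Lemma xi_indep (r : seq 'rV[int]_n) (c : 'rV[int]_n -> C) :
  uniq r -> (forall b, b \in r -> inB C a b) ->
  (forall s : Lpoly C n, inS a s -> forall k,
      \sum_(b <- r) c b * xi (C:=C) a a0 l l0 b s k = 0) ->
  forall b, b \in r -> c b = 0.
Proof.
move=> ur hr h b0 hb0.
have := h << 1 *g b0 >> (@inS_U 1 b0 (inB_inM (hr _ hb0))) 0%N.
rewrite (bigD1_seq b0) //= xi_at_unit; try exact: hr.
rewrite eqxx mulr1 big_seq_cond big1 ?addr0 // => b /andP[br nb].
rewrite xi_at_unit; [|exact: hr|exact: hr].
by rewrite (negbTE nb) mulr0.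
Qed.

Variable phi : Lpoly C n -> pseries C.
Hypothesis Hphi : isDhom (C:=C) a a0 l l0 phi.

Lemma phi_lin p s t k : inS a s -> inS a t ->
  phi (p *: s + t) k = pscale p (phi s) k + phi t k.
Proof. by case: Hphi => h _ _ hs ht; rewrite h. Qed.

Lemma phi0 k : phi 0 k = 0.
Proof.
have := phi_lin 1 k inS0 inS0; rewrite scaler0 addr0 pscale1 => e.
by apply: (@addrI _ (phi 0 k)); rewrite addr0 -e.
Qed.

Lemma phiD s t k : inS a s -> inS a t -> phi (s + t) k = phi s k + phi t k.
Proof. by move=> hs ht; rewrite -[s in LHS]scale1r phi_lin // pscale1. Qed.

Lemma phiZ p s k : inS a s -> phi (p *: s) k = pscale p (phi s) k.
Proof.
move=> hs; have := phi_lin p k hs inS0; rewrite addr0 phi0 addr0 => ->.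
by apply: pscale_ext.
Qed.

Lemma phiN s k : inS a s -> phi (- s) k = - phi s k.
Proof.
move=> hs; rewrite -scaleN1r phiZ // (_ : (-1 : {poly C}) = (-1)%:P).
  by rewrite pscaleC mulN1r.
by rewrite polyCN polyC1.
Qed.

Lemma phi_sum (I : Type) (r : seq I) (P : pred I) (F : I -> Lpoly C n) k :
  (forall i, P i -> inS a (F i)) ->
  phi (\sum_(i <- r | P i) F i) k = \sum_(i <- r | P i) phi (F i) k.
Proof.
move=> h; elim: r => [|x r IH]; first by rewrite !big_nil phi0.
rewrite !big_cons; case: ifP => Px //.
rewrite phiD; [by rewrite IH | exact: h | exact: inS_sum].
Qed.

Definition hh u := phi << 1 *g u >>.

Lemma U_scale (p : {poly C}) (u : 'rV[int]_n) : << p *g u >> = p *: << 1 *g u >> :> Lpoly C n.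
Proof. by apply/malgP => k; rewrite mcoeffZ !mcoeffU mulrnAr mulr1. Qed.

Lemma phiU p u k : inM C a u -> phi << p *g u >> k = pscale p (hh u) k.
Proof. by move=> hu; rewrite U_scale phiZ //; apply: inS_U. Qed.

Lemma phi_decomp s k : inS a s ->
  phi s k = \sum_(u <- msupp s) pscale s@_u (hh u) k.
Proof.
move=> hs; rewrite {1}(monalgE s) phi_sum => [|u _].
  rewrite big_seq_cond [RHS]big_seq_cond; apply: eq_bigr => u /andP[hu _].
  by rewrite phiU //; apply: hs.
move=> v; rewrite msuppU; case: eqP => [_|/eqP h]; first by rewrite in_fset0.
by rewrite in_fset1 => /eqP ->; apply: hs; rewrite -mcoeff_neq0.
Qed.


Lemma hh_deriv u k : inM C a u ->
  hh u k.+1 * k.+1%:R = - (l0%:R * hh (u + a0) k).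
Proof.
move=> hu; case: Hphi => _ _ hD.
have := hD _ (@inS_U 1 u hu) k; rewrite /psderiv /hh => <-.
have eD : Dlam a0 l0 << (1 : {poly C}) *g u >> =
          (- (l0%:R : {poly C})) *: << 1 *g (u + a0) >>.
  rewrite /Dlam msuppU oner_eq0 big_seq_fset1 mcoeffUU mulr1.
  rewrite (_ : (1 : {poly C})^`() = 0) ?monalgU0 ?add0r; last by rewrite -polyC1 derivC.
  by rewrite U_scale scaleNr.
rewrite eD phiZ; last by apply: inS_U; apply: inM_add hu (inM_a0 C Hl0 Ha0).
by rewrite (_ : - (l0%:R : {poly C}) = (- l0%:R)%:P) ?pscaleC ?mulNr // polyCN rmorph_nat.
Qed.

Lemma hh_formula k u : inM C a u ->
  hh u k = hh (u + a0 *+ k) 0%N * (- l0%:R) ^+ k / (k`!)%:R.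
Proof.
elim: k u => [|k IH] u hu; first by rewrite mulr0n addr0 expr0 fact0 divr1 mulr1.
have hk1 : (k.+1)%:R != 0 :> C by rewrite pnatr_eq0.
have hk : (k`!)%:R != 0 :> C by rewrite pnatr_eq0 -lt0n fact_gt0.
apply: (mulIf hk1); rewrite hh_deriv // IH; last by apply: inM_add hu (inM_a0 C Hl0 Ha0).
rewrite -addrA -mulrS factS natrM exprS.
field.
by rewrite hk nat1r hk1.
Qed.


Lemma pscale_at0 (p : {poly C}) (F : pseries C) : pscale p F 0 = p`_0 * F 0%N.
Proof. by rewrite /pscale big_ord1. Qed.

Lemma coef0_int (z : int) : (z%:~R : {poly C})`_0 = z%:~R.
Proof. by rewrite -(rmorph_int (@polyC C)) coefC. Qed.

Lemma phi_Dx_unit (i : 'I_n) w : inM C a w ->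
  phi (Dx a a0 l l0 i << 1 *g w >>) 0 =
  (w ord0 i)%:~R * hh w 0 + \sum_(j < m) ((l j)%:Z * a j ord0 i)%:~R * hh (w + a j) 0.
Proof.
move=> hw.
have hwj j : inM C a (w + a j) by apply: inM_add hw (inM_aq C a j).
have hw0 : inM C a (w + a0) by apply: inM_add hw (inM_a0 C Hl0 Ha0).
rewrite /Dx msuppU oner_eq0 big_seq_fset1 mcoeffUU.
rewrite phiD; last 2 first.
- by apply: inSD; [apply: inS_U | apply: inS_sum => j _; apply: inS_U].
- by rewrite -scaleN1r; apply: inSZ; apply: inS_U.
rewrite phiD; last 2 first.
- exact: inS_U.
- by apply: inS_sum => j _; apply: inS_U.
rewrite phiN; last exact: inS_U.
rewrite phi_sum; last by move=> j _; apply: inS_U.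
rewrite phiU // pscale_intl pscale1 (phiU _ _ hw0) pscale_Xl pscale1 pscaleX mulr0 subr0.
by congr (_ + _); apply: eq_bigr => j _; rewrite phiU // pscale_intl pscale1.
Qed.

Lemma rec_from_i (x : C) (y : 'I_m -> C) w (t : 'I_m -> C) : is_comb a t w ->
  (forall i, (w ord0 i)%:~R * x + \sum_(j < m) ((l j)%:Z * a j ord0 i)%:~R * y j = 0) ->
  forall q, t q * x + (l q)%:R * y q = 0.
Proof.
move=> hw h; apply: (cplx_indep Hli) => i.
rewrite -[RHS](h i) (hw i) mulr_suml -big_split /=; apply: eq_bigr => q _.
by rewrite intrM natzC mulrDl; congr (_ + _); rewrite mulrAC.
Qed.

Lemma inM_coords w (t : 'I_m -> C) :
  (forall j, t j \is Num.real /\ 0 <= t j) -> is_comb a t w -> inM C a w.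
Proof.
move=> ht hw; split; exists t; split => // j; by case: (ht j).
Qed.

Lemma hh_rec w (t : 'I_m -> C) q :
  (forall j, t j \is Num.real /\ 0 <= t j) -> is_comb a t w ->
  t q * hh w 0 + (l q)%:R * hh (w + a q) 0 = 0.
Proof.
move=> ht hw; have hwM := inM_coords ht hw.
apply: (rec_from_i (x := hh w 0%N) (y := fun q => hh (w + a q) 0%N) hw) => i.
rewrite -phi_Dx_unit //.
by case: Hphi => _ hDx _; apply: hDx; apply: inS_U.
Qed.


Local Notation c := (fun b => hh b 0%N).
Local Notation rB := (rB C a).

Definition Dd w := hh w 0%N - \sum_(b <- rB) c b * gcoef C a l b w.

Lemma Dd_rec w (t : 'I_m -> C) q :
  (forall j, t j \is Num.real /\ 0 <= t j) -> is_comb a t w ->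
  t q * Dd w + (l q)%:R * Dd (w + a q) = 0.
Proof.
move=> ht hw; have h1 := hh_rec q ht hw.
have hS : t q * (\sum_(b <- rB) c b * gcoef C a l b w)
        + (l q)%:R * (\sum_(b <- rB) c b * gcoef C a l b (w + a q)) = 0.
  rewrite !mulr_sumr -big_split big_seq big1 // => b hb /=.
  rewrite mulrCA [(l q)%:R * _]mulrCA -mulrDr.
  by rewrite (g_rec Hli Hl (proj1 (rB_mem _ _ _) hb) q ht hw) mulr0.
by rewrite /Dd !mulrBr addrACA h1 -opprD hS oppr0 addr0.
Qed.

Lemma Dd_B w : inB C a w -> Dd w = 0.
Proof.
move=> hw; have hwr : w \in rB by apply/rB_mem.
rewrite /Dd (bigD1_seq w) ?rB_uniq //= (g_self l Hli hw) mulr1 big_seq_cond big1.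
  by rewrite addr0 subrr.
move=> b /andP[hb nb]; rewrite (g_other l Hli (proj1 (rB_mem _ _ _) hb) hw) ?mulr0 // eq_sym; exact: nb.
Qed.

Lemma step_down w (t : 'I_m -> C) :
  (forall j, t j \is Num.real /\ 0 <= t j) -> is_comb a t w ->
  ~~ [forall q, t q < 1] ->
  exists q (t' : 'I_m -> C),
    [/\ forall j, t' j \is Num.real /\ 0 <= t' j, is_comb a t' (w - a q)
      & \sum_(j < m) t' j = \sum_(j < m) t j - 1].
Proof.
move=> ht hw /forallPn [q hq].
have tq1 : 1 <= t q by rewrite real_leNgt ?(ht q).1 ?real1.
exists q, (fun j => t j - (j == q)%:R); split.
- move=> j; case: (ht j) => r p; split; first by rewrite rpredB ?realn.
  by case: eqP => [->|_]; rewrite ?subr_ge0 ?subr0.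
- exact: is_combB hw (is_comb_unit C a q).
rewrite sumrB; congr (_ - _); rewrite (bigD1 q) //= eqxx big1 ?addr0 //.
by move=> j /negbTE ->.
Qed.

Lemma Dd_zero N : forall w (t : 'I_m -> C),
  (forall j, t j \is Num.real /\ 0 <= t j) -> is_comb a t w ->
  \sum_(j < m) t j <= N%:R -> Dd w = 0.
Proof.
elim: N => [|N IH] w t ht hw hN.
  case: (boolP [forall q, t q < 1]) => [/forallP hall|hn].
    apply: Dd_B; split; first by exists t; split => // j; case: (ht j).
    by exists t; split => // j; case: (ht j) => r p; rewrite r p hall.
  case: (step_down ht hw hn) => q [t' [ht' hw' hs]].
  have : 0 <= \sum_(j < m) t' j by apply: sumr_ge0 => j _; case: (ht' j).
  rewrite hs subr_ge0 => h1.
  by have := le_trans h1 hN; rewrite ler10.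
case: (boolP [forall q, t q < 1]) => [/forallP hall|hn].
  apply: Dd_B; split; first by exists t; split => // j; case: (ht j).
  by exists t; split => // j; case: (ht j) => r p; rewrite r p hall.
case: (step_down ht hw hn) => q [t' [ht' hw' hs]].
have h0 : Dd (w - a q) = 0.
  apply: (IH _ t' ht' hw'); by rewrite hs lerBlDr natr1.
have := Dd_rec q ht' hw'; rewrite h0 mulr0 add0r subrK => /eqP.
by rewrite mulf_eq0 (negbTE (l_neq0 C Hl q)) => /eqP.
Qed.

Lemma Dd_M w : inM C a w -> Dd w = 0.
Proof.
move=> [_ [t [ht hw]]].
have [N hN] := coords_bound Hli ht hw.
exact: Dd_zero hN.
Qed.

Lemma hh_expand u k : inM C a u ->
  hh u k = \sum_(b <- rB) c b * Gser C a a0 l l0 b u k.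
Proof.
move=> hu; rewrite hh_formula //.
have := Dd_M (inM_a0n Hl0 Ha0 k hu); rewrite /Dd => /eqP; rewrite subr_eq0 => /eqP ->.
rewrite !mulr_suml; apply: eq_bigr => b _; rewrite /Gser !mulrA.
by [].
Qed.

Lemma span_phi : exists (r : seq 'rV[int]_n) (cc : 'rV[int]_n -> C),
  [/\ uniq r, (forall b, b \in r -> inB C a b) &
      forall s : Lpoly C n, inS a s -> forall k,
        phi s k = \sum_(b <- r) cc b * xi (C:=C) a a0 l l0 b s k].
Proof.
exists rB, c; split; [exact: rB_uniq | by move=> b /rB_mem | move=> s hs k].
rewrite phi_decomp //.
transitivity (\sum_(u <- msupp s) \sum_(b <- rB) c b * pscale s@_u (Gser C a a0 l l0 b u) k).
  rewrite big_seq [RHS]big_seq; apply: eq_bigr => u hu.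
  rewrite (pscale_ext _ (G := fun j => \sum_(b <- rB) c b * Gser C a a0 l l0 b u j)).
    by rewrite pscale_sumr; apply: eq_bigr => b _; rewrite pscaleZr.
  by move=> j _; apply: hh_expand; apply: hs.
rewrite exchange_big /=; apply: eq_bigr => b _.
by rewrite /xi mulr_sumr.
Qed.

End Span1.

Unset Implicit Arguments.

Theorem corollary3p18 (C : numClosedFieldType) (n m : nat)
  (a : 'I_m -> 'rV[int]_n) (a0 : 'rV[int]_n) (l : 'I_m -> nat) (l0 : nat) :
  lin_indep_real C a ->
  (forall j, (0 < l j)%N) -> (0 < l0)%N ->
  gcdn l0 (\big[gcdn/0%N]_(j < m) l j) = 1%N ->
  a0 *+ l0 = \sum_(j < m) a j *+ l j ->
  l0 = (\sum_(j < m) l j)%N ->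
  (* each xi_b, b in B, vanishes on sum_i D_i S and is a D-module hom W -> C[[lambda]] *)
  (forall b, inB C a b -> isDhom (C:=C) a a0 l l0 (xi (C:=C) a a0 l l0 b)) /\
  (* the xi_b, b in B, are C-linearly independent in Hom_D(W, C[[lambda]]) *)
  (forall (r : seq 'rV[int]_n) (c : 'rV[int]_n -> C),
      uniq r -> (forall b, b \in r -> inB C a b) ->
      (forall s : Lpoly C n, inS a s -> forall k,
          \sum_(b <- r) c b * xi (C:=C) a a0 l l0 b s k = 0) ->
      forall b, b \in r -> c b = 0) /\
  (* and they span Hom_D(W, C[[lambda]]) *)
  (forall phi : Lpoly C n -> pseries C, isDhom (C:=C) a a0 l l0 phi ->
      exists (r : seq 'rV[int]_n) (c : 'rV[int]_n -> C),
        [/\ uniq r, (forall b, b \in r -> inB C a b) &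
            forall s : Lpoly C n, inS a s -> forall k,
              phi s k = \sum_(b <- r) c b * xi (C:=C) a a0 l l0 b s k]).
Proof.
move=> Hli Hl Hl0 _ Ha0 _; split; [|split].
- by move=> b hb; apply: (xi_isDhom Hli Hl Hl0 Ha0 hb).
- by move=> r c ur hr h; apply: (xi_indep Hli ur hr h).
- by move=> phi Hphi; apply: (span_phi Hli Hl Hl0 Ha0 Hphi).
Qed.
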